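(* The linear map $\Theta:\mathbf H_o\to\mathbf{FQSym}$ defined on ordered forests by $\Theta(\mathbb F)=\sum_{\sigma\in S_{\mathbb F}}\sigma$ is a morphism of Hopf algebras, homogeneous of degree $0$.
   Context: A rooted forest is a finite graph each of whose components is a tree with a distinguished root; edges are oriented towards the roots, and for distinct vertices $v,w$ we write $v\twoheadrightarrow w$ if there is an oriented path from $v$ to $w$. An ordered forest with $n$ vertices is a rooted forest with a total order on its vertices, identifying the vertex set with $\{1,\dots,n\}$ (isomorphic ordered forests are identified). $\mathbf H_o$ is the $K$-vector space ($K=\mathbb R$ or $\mathbb C$) with basis all ordered forests, including the empty forest $1$, graded by number of vertices, with product $\mathbb F\mathbb G$ = disjoint union where the vertices of $\mathbb F$ (with $k$ vertices) keep labels $1..k$ and vertex $j$ of $\mathbb G$ gets label $k+j$, and coproduct $\Delta(\mathbb F)=\sum_{\vec v\models V(\mathbb F)}\mathrm{Roo}_{\vec v}\mathbb F\otimes\mathrm{Lea}_{\vec v}\mathbb F$, where an admissible cut $\vec v$ is a (possibly empty) set of vertices no two of which satisfy $v\twoheadrightarrow w$, $\mathrm{Lea}_{\vec v}\mathbb F$ is the subforest on $\vec v\cup\{w:\exists v\in\vec v, w\twoheadrightarrow v\}$, $\mathrm{Roo}_{\vec v}\mathbb F$ is the subforest on the remaining vertices, both ordered by restriction. $\Sigma_n$ is the symmetric group with $(\sigma\circ\tau)(i)=\sigma(\tau(i))$; for $\sigma\in\Sigma_k,\tau\in\Sigma_l$, $(\sigma\otimes\tau)(i)=\sigma(i)$ ($i\le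 k$), $=k+\tau(i-k)$ ($i>k$). $Sh(k,l)=\{\zeta\in\Sigma_{k+l}:\zeta^{-1}(1)<\dots<\zeta^{-1}(k),\ \zeta^{-1}(k+1)<\dots<\zeta^{-1}(k+l)\}$. $\mathbf{FQSym}$ is the graded vector space with basis $\bigsqcup_{n\ge0}\Sigma_n$ (degree $n$ for $\Sigma_n$; the element of $\Sigma_0$ is the unit $1$), product $\sigma\cdot\tau=\sum_{\epsilon\in Sh(k,l)}(\sigma\otimes\tau)\circ\epsilon$ for $\sigma\in\Sigma_k,\tau\in\Sigma_l$, and coproduct $\Delta(\sigma)=\sum_{k=0}^n\sigma_1^{(k)}\otimes\sigma_2^{(k)}$ for $\sigma\in\Sigma_n$, where $\sigma_1^{(k)}$, $\sigma_2^{(k)}$ are the standardizations of the words $(\sigma(1),\dots,\sigma(k))$ and $(\sigma(k+1),\dots,\sigma(n))$ (standardization replaces the letters by $1,2,\dots$ preserving their relative order); equivalently $\sigma=\zeta^{-1}\circ(\sigma_1^{(k)}\otimes\sigma_2^{(k)})$ with $\zeta\in Sh(k,n-k)$. For an ordered forest $\mathbb F$ with $n$ vertices, $S_{\mathbb F}$ is the set of $\sigma\in\Sigma_n$ such that $i\twoheadrightarrow j$ implies $\sigma^{-1}(i)>\sigma^{-1}(j)$. *)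

(* Defs.v *)
From HB Require Import structures.
From mathcomp Require Import all_boot all_order all_algebra all_fingroup.
Set Implicit Arguments. Unset Strict Implicit. Unset Printing Implicit Defensive.
Import GRing.Theory Num.Theory.
Local Open Scope ring_scope.

(* ---------- Ordered forests ----------
   An ordered forest on n vertices (vertices 'I_n = {0..n-1}, i.e. the paper's
   labels 1..n shifted by one) is given by its parent function: p v = Some w
   iff there is an edge v -> w (oriented towards the root); roots have p v = None.
   Since an isomorphism of ordered forests must preserve the total order, the
   labelled parent function is a canonical representative of the iso class. *)

Definition rawforest n := {ffun 'I_n -> option 'I_n}.

Definition edge n (p : rawforest n) : rel 'I_n := fun a b => p a == Some b.

Definition reach n (p : rawforest n) (v w : 'I_n) : bool :=
  (v != w) && connect (edge p) v w.

Definition acyclic n (p : rawforest n) : bool :=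
  [forall v, forall w, edge p v w ==> ~~ connect (edge p) w v].

Definition forest n := {p : rawforest n | acyclic p}.

(* encoding of a raw forest as a list (used to compare forests of different
   (index) types) *)
Definition enc n (p : rawforest n) : seq (option nat) :=
  [seq omap (@nat_of_ord n) (p i) | i <- enum 'I_n].

(* disjoint union FG: vertices of F keep labels, vertex j of G gets k + j *)
Definition rawconcat k l (f : rawforest k) (g : rawforest l) : rawforest (k + l) :=
  [ffun i => match split i with
             | inl a => omap (@lshift k l) (f a)
             | inr b => omap (@rshift k l) (g b)
             end].

(* induced subforest on A, vertices renumbered in increasing order *)
Definition rawrestr n (p : rawforest n) (A : {set 'I_n}) : rawforest #|A| :=
  [ffun j => obind (fun w => insub (index w (enum A))) (p (enum_val j))].

Definition admissible n (p : rawforest n) (V : {set 'I_n}) : bool :=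
  [forall v in V, forall w in V, ~~ reach p v w].

Definition LeaSet n (p : rawforest n) (V : {set 'I_n}) : {set 'I_n} :=
  [set w | (w \in V) || [exists v in V, reach p w v]].

Definition RooSet n (p : rawforest n) (V : {set 'I_n}) : {set 'I_n} :=
  ~: LeaSet p V.

Definition inS n (p : rawforest n) (s : 'S_n) : bool :=
  [forall i, forall j, reach p i j ==> ((s^-1)%g j < (s^-1)%g i)%N].

(* ---------- homogeneous components ----------
   degree-n component of H_o : K-valued coefficient functions on forests of
   size n; degree-n component of FQSym : coefficient functions on 'S_n.
   Tensor product of two (free, finite-dim) components: coefficient functions on
   pairs of basis elements. *)

Section Alg.
Variable K : numFieldType.

Definition Hcomp n := {ffun forest n -> K}.
Definition Qcomp n := {ffun 'S_n -> K}.
Definition HHcomp a b := {ffun (forest a * forest b)%type -> K}.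
Definition QQcomp a b := {ffun ('S_a * 'S_b)%type -> K}.

Definition mulH k l (x : Hcomp k) (y : Hcomp l) : Hcomp (k + l) :=
  [ffun H : forest (k + l) =>
     \sum_(F : forest k) \sum_(G : forest l | val H == rawconcat (val F) (val G))
        x F * y G].

(* unit of H_o : the empty forest *)
Definition unitH : Hcomp 0 := [ffun _ => 1].
(* counit of H_o restricted to degree 0 (it vanishes in positive degree) *)
Definition counitH0 (x : Hcomp 0) : K := \sum_(F : forest 0) x F.

Definition deltaH a b (x : Hcomp (a + b)) : HHcomp a b :=
  [ffun q : forest a * forest b =>
     \sum_(F : forest (a + b))
       \sum_(V : {set 'I_(a + b)} |
               [&& admissible (val F) V,
                   enc (rawrestr (val F) (RooSet (val F) V)) == enc (val q.1) &
                   enc (rawrestr (val F) (LeaSet (val F) V)) == enc (val q.2)])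
         x F].

Definition ptens k l (s : 'S_k) (t : 'S_l) (i : 'I_(k + l)) : 'I_(k + l) :=
  match split i with
  | inl a => lshift l (s a)
  | inr b => rshift k (t b)
  end.

Definition isShuffle k l (e : 'S_(k + l)) : bool :=
  [forall i : 'I_k, forall j : 'I_k,
     (i < j)%N ==> ((e^-1)%g (lshift l i) < (e^-1)%g (lshift l j))%N] &&
  [forall i : 'I_l, forall j : 'I_l,
     (i < j)%N ==> ((e^-1)%g (rshift k i) < (e^-1)%g (rshift k j))%N].

Definition mulQ k l (x : Qcomp k) (y : Qcomp l) : Qcomp (k + l) :=
  [ffun pi : 'S_(k + l) =>
     \sum_(s : 'S_k) \sum_(t : 'S_l)
       \sum_(e : 'S_(k + l) | isShuffle e && [forall i, pi i == ptens s t (e i)])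
         x s * y t].

Definition unitQ : Qcomp 0 := [ffun _ => 1].
Definition counitQ0 (x : Qcomp 0) : K := \sum_(s : 'S_0) x s.

(* al is the standardization of the word (w 0, ..., w (m-1)) (distinct letters) *)
Definition isStd m n (al : 'S_m) (w : 'I_m -> 'I_n) : bool :=
  [forall i, forall j, (al i < al j)%N == (w i < w j)%N].

Definition deltaQ a b (x : Qcomp (a + b)) : QQcomp a b :=
  [ffun q : 'S_a * 'S_b =>
     \sum_(s : 'S_(a + b) | isStd q.1 (fun i => s (lshift b i)) &&
                            isStd q.2 (fun i => s (rshift a i)))
        x s].

Definition Theta n (x : Hcomp n) : Qcomp n :=
  [ffun s : 'S_n => \sum_(F : forest n | inS (val F) s) x F].

Definition Theta2 a b (z : HHcomp a b) : QQcomp a b :=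
  [ffun q : 'S_a * 'S_b =>
     \sum_(p : forest a * forest b | inS (val p.1) q.1 && inS (val p.2) q.2) z p].

End Alg.

(* Main.v *)
Require Import Defs.
From mathcomp Require Import all_boot all_order all_algebra all_fingroup.
Set Implicit Arguments. Unset Strict Implicit. Unset Printing Implicit Defensive.
Import GRing.Theory.

Section ImgHom.
Variables (T U : finType) (h : T -> U) (e : rel U) (e' : rel T).
Hypothesis ee' : forall x y, e' x y -> e (h x) (h y).
Lemma connect_img_hom x y : connect e' x y -> connect e (h x) (h y).
Proof.
move=> /connectP [p pth ->]; apply/connectP; exists (map h p).
  by rewrite path_map; apply: sub_path pth => a b /ee'.
by rewrite last_map.
Qed.
End ImgHom.

Section Img.
Variables (T U : finType) (h : T -> U) (e : rel U) (e' : rel T).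
Hypothesis hinj : injective h.
Hypothesis ee' : forall x y, e (h x) (h y) = e' x y.
Hypothesis clos : forall x u, e (h x) u -> exists y, u = h y.

Lemma connect_img x u : connect e (h x) u -> exists2 y, u = h y & connect e' x y.
Proof.
move=> /connectP [p pth ->]; elim: p x pth => [|v p IH] x /=.
  by move=> _; exists x => //; apply: connect0.
move=> /andP [exv pth]; have [y vy] := clos exv; subst v.
have [z -> cz] := IH y pth; exists z => //.
apply: connect_trans (cz); apply: connect1; rewrite -ee'; exact exv.
Qed.

Lemma connect_imgE x y : connect e (h x) (h y) = connect e' x y.
Proof.
apply/idP/idP; last by apply: connect_img_hom => a b; rewrite ee'.
by move=> /connect_img [z /hinj ->].
Qed.
End Img.

Section Forest.
Variables (n : nat) (p : rawforest n).
Hypothesis ac : acyclic p.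

Lemma acE v w : edge p v w -> ~~ connect (edge p) w v.
Proof. by move: ac => /forallP/(_ v)/forallP/(_ w)/implyP. Qed.

Lemma connect_antisym u w : connect (edge p) u w -> connect (edge p) w u -> u = w.
Proof.
move=> /connectP [[|v q] /= pth ->] // cwu.
move: pth => /andP [euv pth].
have cvw : connect (edge p) v (last v q) by apply/connectP; exists q.
by move: (acE euv); rewrite (connect_trans cvw cwu).
Qed.

Lemma edge_reach u w : edge p u w -> reach p u w.
Proof.
move=> euw; rewrite /reach (connect1 euw) andbT; apply/eqP => E; subst w.
by move: (acE euw); rewrite connect0.
Qed.

Lemma reach_asym u w : reach p u w -> ~~ reach p w u.
Proof.
move=> /andP [nuw cuw]; apply/negP => /andP [_ cwu].
by move: nuw; rewrite (connect_antisym cuw cwu) eqxx.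
Qed.

Lemma reach_irr u : reach p u u = false.
Proof. by rewrite /reach eqxx. Qed.

Lemma reach_trans u w x : reach p u w -> reach p w x -> reach p u x.
Proof.
move=> ruw /andP [nwx cwx]; move: (ruw) => /andP [nuw cuw].
rewrite /reach (connect_trans cuw cwx) andbT; apply/eqP => E; subst x.
by move: (reach_asym ruw); rewrite /reach nwx cwx.
Qed.
End Forest.

Lemma ev_lt n (A : {set 'I_n}) (i j : 'I_#|A|) :
  (enum_val i < enum_val j)%N = (i < j)%N.
Proof.
have inc : sorted ltn (map val (enum A)).
  rewrite -[enum _](eq_filter (mem_enum _)).
  rewrite -(eq_filter (mem_map val_inj _)) -filter_map.
  by rewrite (sorted_filter ltn_trans) // unlock val_ord_enum iota_ltn_sorted.
have H (x y : 'I_#|A|) : (x < y)%N -> (enum_val x < enum_val y)%N.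
  move=> lxy; have sz : size (enum A) = #|A| by rewrite cardE.
  have [x0 _] : exists x0 : 'I_n, True by exists (enum_val x).
  rewrite (enum_val_nth x0 x) (enum_val_nth x0 y).
  rewrite -(nth_map x0 0%N val) ?sz ?ltn_ord // -(nth_map x0 0%N val) ?sz ?ltn_ord //.
  apply: (sorted_ltn_nth ltn_trans) => //; rewrite inE size_map sz ltn_ord //.
case: (ltngtP i j) => [lij|lji|eij]; first exact: H.
  by apply/negbTE; rewrite -leqNgt ltnW // H.
by rewrite (val_inj eij) ltnn.
Qed.

Lemma card_lt m (k : 'I_m) : #|[set x : 'I_m | (x < k)%N]| = k.
Proof.
have le : (k <= m)%N := ltnW (ltn_ord k).
have -> : [set x : 'I_m | (x < k)%N] = widen_ord le @: [set: 'I_k].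
  apply/setP => x; rewrite inE; apply/idP/imsetP => [xk|[y _ ->]]; last exact: (ltn_ord y).
  by exists (Ordinal xk) => //; apply: val_inj.
rewrite card_imset ?cardsT ?card_ord //.
by move=> a b /(congr1 val) /= /val_inj.
Qed.

Lemma rank_perm m (r : 'S_m) a : val (r a) = #|[set b | (r b < r a)%N]|.
Proof.
have -> : [set b | (r b < r a)%N] = r @^-1: [set x : 'I_m | (x < r a)%N].
  by apply/setP => b; rewrite !inE.
by rewrite card_preimset ?card_lt //; apply: perm_inj.
Qed.

Lemma ordequiv_eq m (r r' : 'S_m) :
  (forall a b, (r a < r b)%N = (r' a < r' b)%N) -> r = r'.
Proof.
move=> H; apply/permP => a; apply: val_inj; rewrite (rank_perm r) (rank_perm r').
by apply: eq_card => b; rewrite !inE H.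
Qed.

Lemma std_exists m (w : 'I_m -> nat) : injective w ->
  exists r : 'S_m, forall a b, (r a < r b)%N = (w a < w b)%N.
Proof.
move=> winj.
pose rk a := #|[set b | (w b < w a)%N]|.
have rklt a : (rk a < m)%N.
  have : (rk a < #|[set: 'I_m]|)%N.
    apply: proper_card; apply/properP; split; first exact: subsetT.
    by exists a; rewrite ?inE ?ltnn.
  by rewrite cardsT card_ord.
have mono a b : (w a < w b)%N -> (rk a < rk b)%N.
  move=> lab; apply: proper_card; apply/properP; split.
    by apply/subsetP => c; rewrite !inE => /ltn_trans; apply.
  by exists a; rewrite !inE ?lab ?ltnn.
pose rko a := Ordinal (rklt a).
have equiv a b : (rko a < rko b)%N = (w a < w b)%N.
  rewrite /=; case: (ltngtP (w a) (w b)) => [/mono //|lba|eab].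
    by apply/negbTE; rewrite -leqNgt ltnW // mono.
  by rewrite (winj _ _ eab) ltnn.
have rkinj : injective rko.
  move=> a b E; apply: winj; apply/eqP; rewrite eqn_leq leqNgt -equiv E ltnn /=.
  by rewrite leqNgt -equiv E ltnn.
by exists (perm rkinj) => a b; rewrite !permE equiv.
Qed.

Lemma split_l k l (a : 'I_k) : split (lshift l a) = inl a.
Proof. exact: (unsplitK (inl _ a)). Qed.
Lemma split_r k l (b : 'I_l) : split (rshift k b) = inr b.
Proof. exact: (unsplitK (inr _ b)). Qed.

Section Concat.
Variables (k l : nat) (f : rawforest k) (g : rawforest l).
Let c := rawconcat f g.

Lemma concat_l a : c (lshift l a) = omap (@lshift k l) (f a).
Proof. by rewrite /c /rawconcat ffunE split_l. Qed.
Lemma concat_r b : c (rshift k b) = omap (@rshift k l) (g b).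
Proof. by rewrite /c /rawconcat ffunE split_r. Qed.

Lemma edge_ll a a' : edge c (lshift l a) (lshift l a') = edge f a a'.
Proof.
rewrite /edge concat_l; case: (f a) => [x|] //=.
Qed.
Lemma edge_rr b b' : edge c (rshift k b) (rshift k b') = edge g b b'.
Proof.
rewrite /edge concat_r; case: (g b) => [x|] //=.
by rewrite !(inj_eq (@Some_inj _)) ?(inj_eq (@rshift_inj _ _)).
Qed.
Lemma edge_lc a u : edge c (lshift l a) u -> exists y, u = lshift l y.
Proof. by rewrite /edge concat_l; case: (f a) => [x|] //= /eqP [<-]; exists x. Qed.
Lemma edge_rc b u : edge c (rshift k b) u -> exists y, u = rshift k y.
Proof. by rewrite /edge concat_r; case: (g b) => [x|] //= /eqP [<-]; exists x. Qed.

Lemma conn_ll a a' : connect (edge c) (lshift l a) (lshift l a') = connect (edge f) a a'.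
Proof. apply: connect_imgE; [exact: lshift_inj | exact: edge_ll | exact: edge_lc]. Qed.
Lemma conn_rr b b' : connect (edge c) (rshift k b) (rshift k b') = connect (edge g) b b'.
Proof. apply: connect_imgE; [exact: rshift_inj | exact: edge_rr | exact: edge_rc]. Qed.
Lemma conn_lr a b : connect (edge c) (lshift l a) (rshift k b) = false.
Proof.
apply/negP => /(connect_img (@edge_ll) (@edge_lc)) [y /eqP].
by rewrite eq_rlshift.
Qed.
Lemma conn_rl a b : connect (edge c) (rshift k b) (lshift l a) = false.
Proof.
apply/negP => /(connect_img (@edge_rr) (@edge_rc)) [y /eqP].
by rewrite eq_lrshift.
Qed.

Lemma reach_ll a a' : reach c (lshift l a) (lshift l a') = reach f a a'.
Proof. by rewrite /reach conn_ll eq_lshift. Qed.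
Lemma reach_rr b b' : reach c (rshift k b) (rshift k b') = reach g b b'.
Proof. by rewrite /reach conn_rr eq_rshift. Qed.
Lemma reach_lr a b : reach c (lshift l a) (rshift k b) = false.
Proof. by rewrite /reach conn_lr andbF. Qed.
Lemma reach_rl a b : reach c (rshift k b) (lshift l a) = false.
Proof. by rewrite /reach conn_rl andbF. Qed.

Lemma acyclic_concat : acyclic f -> acyclic g -> acyclic c.
Proof.
move=> af ag; apply/forallP => v; apply/forallP => w; apply/implyP.
case: (split_ordP v) => a -> {v}.
  move=> e; have [y ew] := edge_lc e; subst w.
  by rewrite conn_ll; apply: (acE af); rewrite -edge_ll.
move=> e; have [y ew] := edge_rc e; subst w.
by rewrite conn_rr; apply: (acE ag); rewrite -edge_rr.
Qed.

Lemma inS_concat (pi : 'S_(k + l)) :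
  inS c pi =
  [forall a, forall a', reach f a a' ==>
     ((pi^-1)%g (lshift l a') < (pi^-1)%g (lshift l a))%N] &&
  [forall b, forall b', reach g b b' ==>
     ((pi^-1)%g (rshift k b') < (pi^-1)%g (rshift k b))%N].
Proof.
apply/forallP/andP => [H|[/forallP H1 /forallP H2] i].
  split; apply/forallP => a; apply/forallP => a'.
    by have := H (lshift l a) => /forallP/(_ (lshift l a')); rewrite reach_ll.
  by have := H (rshift k a) => /forallP/(_ (rshift k a')); rewrite reach_rr.
apply/forallP => j.
case: (split_ordP i) => a -> {i}; case: (split_ordP j) => a' -> {j}.
- by rewrite reach_ll; move/forallP: (H1 a).
- by rewrite reach_lr.
- by rewrite reach_rl.
- by rewrite reach_rr; move/forallP: (H2 a).
Qed.
End Concat.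

Lemma sort_unique m (w : 'I_m -> nat) : injective w ->
  exists s0 : 'S_m,
    (forall s : 'S_m, [forall i : 'I_m, forall j : 'I_m, (i < j)%N ==> (w (s i) < w (s j))%N] = (s == s0))
    /\ (forall a b, ((s0^-1)%g a < (s0^-1)%g b)%N = (w a < w b)%N).
Proof.
move=> winj; have [r Hr] := std_exists winj.
exists (r^-1)%g; split; last by move=> a b; rewrite invgK Hr.
move=> s; apply/idP/eqP => [/forallP H|->].
  suff E : (s^-1)%g = r by rewrite -E invgK.
  apply: ordequiv_eq => a b; rewrite Hr.
  case: (ltngtP ((s^-1)%g a) ((s^-1)%g b)) => [lab|lba|eab].
  - by have := H ((s^-1)%g a) => /forallP/(_ ((s^-1)%g b))/implyP/(_ lab); rewrite !permKV => ->.
  - have := H ((s^-1)%g b) => /forallP/(_ ((s^-1)%g a))/implyP/(_ lba); rewrite !permKV.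
    by move=> lt; apply/esym/negbTE; rewrite -leqNgt ltnW.
  - by rewrite (perm_inj (val_inj eab)) ltnn.
apply/forallP => i; apply/forallP => j; apply/implyP => lij.
by rewrite -Hr !permKV.
Qed.

Lemma ptens_l k l (s : 'S_k) (t : 'S_l) a : ptens s t (lshift l a) = lshift l (s a).
Proof. by rewrite /ptens split_l. Qed.
Lemma ptens_r k l (s : 'S_k) (t : 'S_l) b : ptens s t (rshift k b) = rshift k (t b).
Proof. by rewrite /ptens split_r. Qed.
Lemma ptens_inj k l (s : 'S_k) (t : 'S_l) : injective (ptens s t).
Proof.
move=> i j; case: (split_ordP i) => a -> {i}; case: (split_ordP j) => b -> {j};
rewrite ?ptens_l ?ptens_r => /eqP; rewrite ?eq_shift // => /eqP /perm_inj -> //.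
Qed.

Section Mult.
Variable K : numFieldType.
Local Open Scope ring_scope.

Lemma sum_forest_eq n (c : rawforest n) (ac : acyclic c) (P : pred (rawforest n)) (z : K) :
  \sum_(H : forest n | P (val H) && (val H == c)) z = if P c then z else 0.
Proof.
case: ifP => Pc.
  rewrite (big_pred1 (exist _ c ac)) // => H /=.
  apply/andP/eqP => [[_ /eqP E]|->]; first by apply: val_inj.
  by rewrite /= Pc.
by rewrite big_pred0 // => H; apply/andP => [[PH /eqP E]]; rewrite E Pc in PH.
Qed.

Lemma sum_if1 (I : finType) (i0 : I) (F : I -> K) :
  \sum_i (if i == i0 then F i else 0) = F i0.
Proof. by rewrite -big_mkcond big_pred1_eq. Qed.

Lemma sum2_if1 (I J : finType) i0 j0 (F : I -> J -> K) :
  \sum_i \sum_j (if (i == i0) && (j == j0) then F i j else 0) = F i0 j0.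
Proof.
rewrite (bigD1 i0) //= [X in _ + X]big1 ?addr0; last first.
  by move=> i ni; apply: big1 => j _; rewrite (negbTE ni).
by rewrite eqxx /= sum_if1.
Qed.

Lemma Theta_mul k l (x : Hcomp K k) (y : Hcomp K l) :
  Theta (mulH x y) = mulQ (Theta x) (Theta y).
Proof.
apply/ffunP => pi; rewrite !ffunE.
pose wF (a : 'I_k) := val ((pi^-1)%g (lshift l a)).
pose wG (b : 'I_l) := val ((pi^-1)%g (rshift k b)).
have wFi : injective wF by move=> a a' /val_inj /perm_inj /lshift_inj.
have wGi : injective wG by move=> a a' /val_inj /perm_inj /rshift_inj.
have [s0 [Hs0 Es0]] := sort_unique wFi.
have [t0 [Ht0 Et0]] := sort_unique wGi.
have Einner s t : \sum_(e | isShuffle e && [forall i, pi i == ptens s t (e i)])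
     (Theta x s * Theta y t) =
     if (s == s0) && (t == t0) then Theta x s * Theta y t else 0.
  pose T := perm (@ptens_inj k l s t).
  pose E := (pi * T^-1)%g.
  have EiE u : (E^-1)%g u = (pi^-1)%g (T u) by rewrite /E invMg invgK permM.
  rewrite (eq_bigl (fun e => ((s == s0) && (t == t0)) && (e == E))).
    by case: ifP => _; [rewrite big_pred1_eq | rewrite big_pred0].
  move=> e; case: (e =P E) => [->|ne].
    have -> : [forall i, pi i == ptens s t (E i)].
      by apply/forallP => i; rewrite /E permM -(permE (@ptens_inj k l s t)) permKV.
    rewrite !andbT /isShuffle -Hs0 -Ht0; congr (_ && _).
      apply: eq_forallb => i; apply: eq_forallb => j.
      by rewrite !EiE /T !(permE (@ptens_inj k l s t)) !ptens_l.
    apply: eq_forallb => i; apply: eq_forallb => j.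
    by rewrite !EiE /T !(permE (@ptens_inj k l s t)) !ptens_r.
  rewrite andbF; apply/negbTE; apply/andP => [[_ /forallP H]]; apply: ne.
  apply/permP => i; rewrite /E permM; apply: (@perm_inj _ T).
  by rewrite permKV permE; apply/esym/eqP.
rewrite [RHS](eq_bigr (fun s => \sum_t
   (if (s == s0) && (t == t0) then Theta x s * Theta y t else 0))); last first.
  by move=> s _; apply: eq_bigr => t _; exact: Einner.
rewrite sum2_if1 !ffunE big_distrlr /=.
rewrite big_mkcond /=.
have E1 (H : forest (k + l)) :
  (if inS (val H) pi then (mulH x y) H else 0) =
  \sum_F \sum_G (if inS (val H) pi && (val H == rawconcat (val F) (val G))
                 then x F * y G else 0).
  rewrite ffunE; case: ifP => h.
    by apply: eq_bigr => F _; rewrite big_mkcond.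
  by rewrite big1 // => F _; rewrite big1.
under eq_bigr do rewrite E1.
rewrite exchange_big /=; under eq_bigr do rewrite exchange_big /=.
rewrite [RHS]big_mkcond; apply: eq_bigr => F _.
have -> : (if inS (val F) s0 then \sum_(G | inS (val G) t0) x F * y G else 0) =
   \sum_G (if inS (val F) s0 && inS (val G) t0 then x F * y G else 0).
  by case: ifP => _; [rewrite big_mkcond | rewrite big1].
apply: eq_bigr => G _.
rewrite -big_mkcond /= (sum_forest_eq (acyclic_concat (valP F) (valP G))
   (fun h => inS h pi)).
rewrite inS_concat.
have -> : inS (val F) s0 = [forall a, forall a', reach (val F) a a' ==>
     ((pi^-1)%g (lshift l a') < (pi^-1)%g (lshift l a))%N].
  apply: eq_forallb => a; apply: eq_forallb => a'; by rewrite Es0.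
have -> : inS (val G) t0 = [forall b, forall b', reach (val G) b b' ==>
     ((pi^-1)%g (rshift k b') < (pi^-1)%g (rshift k b))%N].
  apply: eq_forallb => a; apply: eq_forallb => a'; by rewrite Et0.
by [].
Qed.
End Mult.

Section Unit.
Variable K : numFieldType.
Local Open Scope ring_scope.

Lemma inS0 (p : rawforest 0) (s : 'S_0) : inS p s.
Proof. by apply/forallP => -[]. Qed.

Lemma Theta_unit : Theta (unitH K) = unitQ K.
Proof.
apply/ffunP => s; rewrite !ffunE.
have ac0 : acyclic ([ffun=> None] : rawforest 0) by apply/forallP => -[].
pose F0 : forest 0 := @exist _ (fun p => acyclic p) _ ac0.
rewrite (big_pred1 F0); first by rewrite ffunE.
move=> F; rewrite inS0; apply/esym/eqP; apply: val_inj; apply/ffunP => -[] //.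
Qed.

Lemma Theta_counit (x : Hcomp K 0) : counitQ0 (Theta x) = counitH0 x.
Proof.
rewrite /counitQ0 /counitH0 (big_pred1 (1%g : 'S_0)); last first.
  by move=> s; apply/esym/eqP; apply/permP => -[] //.
by rewrite ffunE; apply: eq_bigl => F; rewrite inS0.
Qed.
End Unit.

Section Restr.
Variables (n : nat) (p : rawforest n) (A : {set 'I_n}).
Let r := rawrestr p A.

Lemma ev_index (w : 'I_n) (k : 'I_#|A|) : (w == enum_val k) = (index w (enum A) == k).
Proof.
have sz : size (enum A) = #|A| by rewrite cardE.
rewrite (enum_val_nth w).
apply/eqP/eqP => [->|E].
  by rewrite index_uniq ?enum_uniq ?sz.
have wA : w \in enum A by rewrite -index_mem E sz.
by rewrite -E nth_index.
Qed.

Lemma edge_restr k k' : edge r k k' = edge p (enum_val k) (enum_val k').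
Proof.
rewrite /edge /r /rawrestr ffunE; case: (p (enum_val k)) => [w|] //=.
case: insubP => [u _ Eu|nA] /=.
  by rewrite !(inj_eq (@Some_inj _)) ev_index -Eu val_eqE.
rewrite (inj_eq (@Some_inj _)) ev_index; apply/esym/negbTE.
by apply: contra nA => /eqP ->; exact: ltn_ord.
Qed.

Lemma hom_restr x y : edge r x y -> edge p (enum_val x) (enum_val y).
Proof. by rewrite edge_restr. Qed.

Lemma acyclic_restr : acyclic p -> acyclic r.
Proof.
move=> ac; apply/forallP => k; apply/forallP => k'; apply/implyP => e.
apply/negP => /(connect_img_hom hom_restr) c.
by move: (acE ac (hom_restr e)); rewrite c.
Qed.

Lemma reach_restr_hom k k' : reach r k k' -> reach p (enum_val k) (enum_val k').
Proof.
move=> /andP [nk ck]; rewrite /reach (inj_eq (@enum_val_inj _ A)) nk.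
exact: connect_img_hom hom_restr _ _ ck.
Qed.

Lemma reach_restr_up (clos : forall (k : 'I_#|A|) u, edge p (enum_val k) u -> u \in A) k k' :
  reach r k k' = reach p (enum_val k) (enum_val k').
Proof.
rewrite /reach (inj_eq (@enum_val_inj _ A)); congr (_ && _); symmetry.
apply: connect_imgE; first exact: enum_val_inj.
  by move=> x y; rewrite edge_restr.
move=> x u /clos uA; exists (enum_rank_in uA u); by rewrite enum_rankK_in.
Qed.

Lemma reach_restr_down (clos : forall (k : 'I_#|A|) u, edge p u (enum_val k) -> u \in A) k k' :
  reach r k k' = reach p (enum_val k) (enum_val k').
Proof.
rewrite /reach (inj_eq (@enum_val_inj _ A)); congr (_ && _).
have -> : connect (edge r) k k' = connect [rel x y | edge r y x] k' k.
  by rewrite connect_rev.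
have -> : connect (edge p) (enum_val k) (enum_val k') =
          connect [rel x y | edge p y x] (enum_val k') (enum_val k).
  by rewrite connect_rev.
symmetry.
apply: (@connect_imgE _ _ _ [rel x y | edge p y x] [rel x y | edge r y x]).
- exact: enum_val_inj.
- by move=> x y /=; rewrite edge_restr.
move=> x u /= /clos uA; exists (enum_rank_in uA u); by rewrite enum_rankK_in.
Qed.
End Restr.

Definition leafclosed n (p : rawforest n) (L : {set 'I_n}) :=
  forall u v, reach p u v -> v \in L -> u \in L.
Definition maxset n (p : rawforest n) (L : {set 'I_n}) :=
  [set v in L | [forall w in L, ~~ reach p v w]].

Section Lea.
Variables (n : nat) (p : rawforest n).
Hypothesis ac : acyclic p.

Lemma admP (V : {set 'I_n}) : admissible p V -> forall v w, v \in V -> w \in V -> ~~ reach p v w.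
Proof. by move=> /forall_inP H v w vV wV; move: (H v vV) => /forall_inP; apply. Qed.

Lemma inLea V w : (w \in LeaSet p V) = (w \in V) || [exists v in V, reach p w v].
Proof. by rewrite inE. Qed.

Lemma lea_closed V : leafclosed p (LeaSet p V).
Proof.
move=> u v ruv; rewrite !inLea => /orP [vV|/exists_inP [v' v'V rvv']];
  apply/orP; right; apply/exists_inP.
  by exists v.
by exists v' => //; apply: reach_trans ruv rvv'.
Qed.

Lemma maxset_adm L : admissible p (maxset p L).
Proof.
apply/forall_inP => v; rewrite inE => /andP [_ /forall_inP H].
apply/forall_inP => w; rewrite inE => /andP [wL _]; exact: H.
Qed.

Lemma maxset_lea L : leafclosed p L -> LeaSet p (maxset p L) = L.
Proof.
move=> lc; apply/setP => w; rewrite inLea; apply/idP/idP.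
  case/orP => [|/exists_inP [v]]; first by rewrite inE => /andP [].
  by rewrite inE => /andP [vL _] rwv; apply: lc rwv vL.
move=> wL.
pose S := [pred v | (v \in L) && connect (edge p) w v].
pose F v := #|[set x | connect (edge p) x v]|.
have Sw : S w by rewrite /S /= wL connect0.
case: (@arg_maxnP _ w S F Sw) => v /andP [vL cwv] maxv.
have vmax : v \in maxset p L.
  rewrite inE vL /=; apply/forall_inP => w' w'L; apply/negP => rvw.
  have Sw' : S w'.
    by rewrite /S /= w'L (connect_trans cwv) //; case/andP: rvw.
  have := maxv _ Sw'; apply/negP; rewrite -ltnNge; apply: proper_card.
  apply/properP; split.
    apply/subsetP => x; rewrite !inE => cxv; apply: connect_trans cxv _.
    by case/andP: rvw.
  exists w'; first by rewrite inE connect0.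
  rewrite inE; apply/negP => cw'v; move: rvw => /andP [nvw cvw'].
  by move: nvw; rewrite (connect_antisym ac cvw' cw'v) eqxx.
case: (w =P v) => [->|nwv]; first by rewrite vmax.
apply/orP; right; apply/exists_inP; exists v => //.
by rewrite /reach cwv andbT; apply/eqP.
Qed.

Lemma maxset_of_lea V : admissible p V -> maxset p (LeaSet p V) = V.
Proof.
move=> adm; apply/setP => v; rewrite inE; apply/idP/idP.
  case/andP; rewrite inLea => /orP [//|/exists_inP [v' v'V rvv']] /forall_inP H.
  by move: (H v'); rewrite inLea v'V rvv' => /(_ isT).
move=> vV; rewrite inLea vV /=; apply/forall_inP => w; rewrite inLea.
case/orP => [wV|/exists_inP [v' v'V rwv']]; first exact: admP adm v w vV wV.
apply/negP => rvw; move: (admP adm vV v'V); rewrite (reach_trans ac rvw rwv').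
by [].
Qed.

Lemma adm_lea_eq V L : leafclosed p L ->
  (admissible p V && (LeaSet p V == L)) = (V == maxset p L).
Proof.
move=> lc; apply/andP/eqP => [[adm /eqP <-]|->].
  by rewrite maxset_of_lea.
by rewrite maxset_adm maxset_lea.
Qed.
End Lea.

Definition qi a (q : 'S_a) (k : nat) : nat :=
  if @insub _ (fun x => (x < a)%N) 'I_a k is Some k' then val ((q^-1)%g k') else 0%N.
Definition inSn m (r : rawforest m) a (q : 'S_a) :=
  [forall i : 'I_m, forall j : 'I_m, reach r i j ==> (qi q j < qi q i)%N].
Definition Ls a b (s : 'S_(a + b)) : {set 'I_(a + b)} := [set v | (a <= (s^-1)%g v)%N].
Definition stdc a b (q1 : 'S_a) (q2 : 'S_b) (s : 'S_(a + b)) :=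
  isStd q1 (fun i => s (lshift b i)) && isStd q2 (fun i => s (rshift a i)).

Lemma qi_cast m a (h : m = a) (q : 'S_a) (k : 'I_m) :
  qi q k = val ((q^-1)%g (cast_ord h k)).
Proof.
rewrite /qi; case: insubP => [u _ Eu|nk].
  by have -> : u = cast_ord h k by apply: val_inj; rewrite Eu.
have : (k < a)%N by rewrite -h ltn_ord.
by rewrite (negbTE nk).
Qed.

Lemma inSn_eq m (r : rawforest m) (q : 'S_m) : inSn r q = inS r q.
Proof.
by apply: eq_forallb => i; apply: eq_forallb => j; rewrite /qi !valK.
Qed.

Lemma enc_size m (r : rawforest m) : size (enc r) = m.
Proof. by rewrite /enc size_map size_enum_ord. Qed.

Lemma enc_inj m : injective (@enc m).
Proof.
move=> r r' /eq_in_map E; apply/ffunP => i.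
have := E i (mem_enum _ i).
by case: (r i) => [x|]; case: (r' i) => [y|] //= [] /val_inj ->.
Qed.

Lemma card_ge a b : #|[set x : 'I_(a + b) | (a <= x)%N]| = b.
Proof.
have -> : [set x : 'I_(a + b) | (a <= x)%N] = @rshift a b @: [set: 'I_b].
  apply/setP => x; rewrite inE; apply/idP/imsetP => [ax|[y _ ->]]; last first.
    by rewrite /= leq_addr.
  move: ax; case: (split_ordP x) => [i ->|j ->] ax; last by exists j.
  by move: ax; rewrite leqNgt (ltn_ord i : (lshift b i < a)%N).
by rewrite card_imset ?cardsT ?card_ord //; apply: rshift_inj.
Qed.

Lemma card_Ls a b (s : 'S_(a + b)) : #|Ls s| = b.
Proof.
have -> : Ls s = (s^-1)%g @^-1: [set x : 'I_(a + b) | (a <= x)%N].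
  by apply/setP => v; rewrite !inE.
by rewrite card_preimset ?card_ge //; apply: perm_inj.
Qed.

Lemma std_on n (A : {set 'I_n}) a (hA : #|A| = a) (q : 'S_a) (f : 'I_a -> 'I_n) :
  injective f -> (forall i, f i \in A) -> (forall i j, (q i < q j)%N = (f i < f j)%N) ->
  forall i, f i = enum_val (cast_ord (esym hA) (q i)).
Proof.
move=> finj fA ord i.
pose g j := cast_ord hA (enum_rank_in (fA i) (f j)).
have gE j : enum_val (cast_ord (esym hA) (g j)) = f j.
  by rewrite /g cast_ordK enum_rankK_in.
have ginj : injective g by move=> j j' E; apply: finj; rewrite -gE E gE.
have E : q = perm ginj.
  apply: ordequiv_eq => j j'; rewrite !permE ord -(gE j) -(gE j') ev_lt //.
by rewrite E permE gE.
Qed.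

Section Sum.
Variable K : numFieldType.
Local Open Scope ring_scope.

Lemma sum_enc m (r : rawforest m) a (q : 'S_a) (z : K) : acyclic r ->
  \sum_(F1 : forest a) (if inS (val F1) q && (enc r == enc (val F1)) then z else 0)
   = if (m == a)%N && inSn r q then z else 0.
Proof.
move=> ac; case: (m =P a) => [E|ne]; last first.
  by apply: big1 => F1 _; rewrite andbC; case: eqP => // /(congr1 size); rewrite !enc_size.
subst a; rewrite -big_mkcond inSn_eq.
rewrite (eq_bigl (fun F1 : forest m => inS (val F1) q && (val F1 == r))).
  by rewrite (sum_forest_eq ac (fun h => inS h q)).
move=> F1 /=; congr (_ && _); rewrite eq_sym.
by apply/eqP/eqP => [/enc_inj|->].
Qed.
End Sum.

Section PerV.
Variables (a b : nat) (p : rawforest (a + b)) (V : {set 'I_(a + b)}).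
Hypothesis ac : acyclic p.
Hypothesis adm : admissible p V.
Variables (q1 : 'S_a) (q2 : 'S_b).
Let L := LeaSet p V.
Let R := RooSet p V.

Lemma inR v : (v \in R) = (v \notin L).
Proof. by rewrite /R /RooSet inE. Qed.

Lemma cardRL : (#|R| + #|L| = a + b)%N.
Proof. by rewrite addnC /R /RooSet cardsC card_ord. Qed.

Lemma Lclosed : leafclosed p L.
Proof. exact: lea_closed. Qed.

Lemma closR (k : 'I_#|R|) u : edge p (enum_val k) u -> u \in R.
Proof.
move=> e; rewrite inR; apply/negP => uL.
have := enum_valP k; rewrite inR => /negP; apply.
exact: Lclosed (edge_reach ac e) uL.
Qed.

Lemma closL (k : 'I_#|L|) u : edge p u (enum_val k) -> u \in L.
Proof. by move=> e; exact: Lclosed (edge_reach ac e) (enum_valP k). Qed.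

Section Card.
Hypothesis hR : #|R| = a.
Lemma hL : #|L| = b.
Proof. by apply/eqP; rewrite -(eqn_add2l a) -{1}hR cardRL. Qed.

Let evR (i : 'I_a) := enum_val (cast_ord (esym hR) i).
Let evL (j : 'I_b) := enum_val (cast_ord (esym hL) j).
Definition sf (u : 'I_(a + b)) :=
  match split u with inl i => evR (q1 i) | inr j => evL (q2 j) end.

Lemma sf_inj : injective sf.
Proof.
have evRi : injective evR by move=> x y /enum_val_inj /cast_ord_inj.
have evLi : injective evL by move=> x y /enum_val_inj /cast_ord_inj.
have RL x y : evR x <> evL y.
  move=> E; have := enum_valP (cast_ord (esym hR) x); rewrite inR.
  by rewrite -/(evR x) E enum_valP.
move=> u w; rewrite /sf; case: (split_ordP u) => i ->; case: (split_ordP w) => j ->.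
- by move/evRi/perm_inj ->.
- by move/RL.
- by move/esym/RL.
- by move/evLi/perm_inj ->.
Qed.

Definition sst := perm sf_inj.

Lemma sst_l i : sst (lshift b i) = evR (q1 i).
Proof. by rewrite permE /sf split_l. Qed.
Lemma sst_r j : sst (rshift a j) = evL (q2 j).
Proof. by rewrite permE /sf split_r. Qed.

Lemma sstinv_R (k : 'I_#|R|) :
  (sst^-1)%g (enum_val k) = lshift b ((q1^-1)%g (cast_ord hR k)).
Proof. by apply: (@perm_inj _ sst); rewrite permKV sst_l permKV /evR cast_ordK. Qed.
Lemma sstinv_L (k : 'I_#|L|) :
  (sst^-1)%g (enum_val k) = rshift a ((q2^-1)%g (cast_ord hL k)).
Proof. by apply: (@perm_inj _ sst); rewrite permKV sst_r permKV /evL cast_ordK. Qed.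

Lemma Ls_sst : Ls sst = L.
Proof.
apply/setP => v; rewrite inE; case: (boolP (v \in L)) => vL.
  by rewrite -(enum_rankK_in vL vL) sstinv_L /= leq_addr.
have vR : v \in R by rewrite inR.
by rewrite -(enum_rankK_in vR vR) sstinv_R /= leqNgt ltn_ord.
Qed.

Lemma stdc_sst : stdc q1 q2 sst.
Proof.
apply/andP; split; apply/forallP => i; apply/forallP => j.
  by rewrite !sst_l /evR ev_lt.
by rewrite !sst_r /evL ev_lt.
Qed.

Lemma sst_unique s : (stdc q1 q2 s && (Ls s == L)) = (s == sst).
Proof.
apply/idP/eqP => [/andP [/andP [/forallP S1 /forallP S2] /eqP E]|->]; last first.
  by rewrite stdc_sst Ls_sst eqxx.
apply/permP => u; case: (split_ordP u) => [i|j] -> {u}.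
  rewrite sst_l; apply: (@std_on _ R a hR q1 (fun i => s (lshift b i))).
  - by move=> x y /perm_inj /lshift_inj.
  - move=> x; rewrite inR -E inE permK /= -ltnNge ltn_ord //.
  - by move=> x y; move: (S1 x) => /forallP /(_ y) /eqP.
rewrite sst_r; apply: (@std_on _ L b hL q2 (fun j => s (rshift a j))).
- by move=> x y /perm_inj /rshift_inj.
- by move=> x; rewrite -E inE permK /= leq_addr.
- by move=> x y; move: (S2 x) => /forallP /(_ y) /eqP.
Qed.

Lemma inS_sst :
  inS p sst = inSn (rawrestr p R) q1 && inSn (rawrestr p L) q2.
Proof.
apply/idP/andP => [H|[/forallP H1 /forallP H2]].
  split; apply/forallP => k; apply/forallP => k'; apply/implyP => /reach_restr_hom r.
    move: H => /forallP /(_ _) /forallP /(_ _) /implyP /(_ r).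
    by rewrite !sstinv_R !(qi_cast hR).
  move: H => /forallP /(_ _) /forallP /(_ _) /implyP /(_ r).
  by rewrite !sstinv_L !(qi_cast hL) /= ltn_add2l.
apply/forallP => u; apply/forallP => v; apply/implyP => ruv.
case: (boolP (u \in L)) => uL; case: (boolP (v \in L)) => vL.
- rewrite -(enum_rankK_in uL uL) -(enum_rankK_in vL vL) !sstinv_L /= ltn_add2l.
  rewrite -!(qi_cast hL).
  move: (H2 (enum_rank_in uL u)) => /forallP /(_ (enum_rank_in vL v)) /implyP; apply.
  by rewrite (reach_restr_down closL) !enum_rankK_in.
- have vR : v \in R by rewrite inR.
  rewrite -(enum_rankK_in uL uL) -(enum_rankK_in vR vR) sstinv_L sstinv_R /=.
  exact: leq_trans (ltn_ord _) (leq_addr _ _).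
- by move: uL; rewrite (Lclosed ruv vL).
have uR : u \in R by rewrite inR.
have vR : v \in R by rewrite inR.
rewrite -(enum_rankK_in uR uR) -(enum_rankK_in vR vR) !sstinv_R /=.
rewrite -!(qi_cast hR).
move: (H1 (enum_rank_in uR u)) => /forallP /(_ (enum_rank_in vR v)) /implyP; apply.
by rewrite (reach_restr_up closR) !enum_rankK_in.
Qed.
End Card.

Variable K : numFieldType.
Local Open Scope ring_scope.

Lemma perV (z : K) :
  \sum_(s : 'S_(a + b)) (if stdc q1 q2 s && inS p s && (Ls s == L) then z else 0) =
  if ((#|R| == a)%N && inSn (rawrestr p R) q1) &&
     ((#|L| == b)%N && inSn (rawrestr p L) q2) then z else 0.
Proof.
case: (#|R| =P a) => [hR|nR]; last first.
  apply: big1 => s _; case: ifP => // /andP [_ /eqP E].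
  exfalso; apply: nR; apply/eqP; rewrite -(eqn_add2r #|L|) cardRL -E card_Ls //.
have -> : (#|L| == b)%N = true by apply/eqP; exact: hL hR.
rewrite /=.
have P s : stdc q1 q2 s && inS p s && (Ls s == L) =
           (s == sst hR) && (inSn (rawrestr p R) q1 && inSn (rawrestr p L) q2).
  have -> : stdc q1 q2 s && inS p s && (Ls s == L) =
            (stdc q1 q2 s && (Ls s == L)) && inS p s.
    by case: (stdc _ _ _); case: (inS _ _); case: (_ == _).
  rewrite sst_unique; case: (s =P sst hR) => [->|] //=.
  by rewrite inS_sst.
under eq_bigr do rewrite P.
case: (_ && _); last by rewrite big1 // => s _; rewrite andbF.
by under eq_bigr do rewrite andbT; rewrite sum_if1.
Qed.
End PerV.

Lemma Ls_closed a b (p : rawforest (a + b)) (s : 'S_(a + b)) :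
  inS p s -> leafclosed p (Ls s).
Proof.
move=> /forallP H u v ruv; rewrite !inE => av.
have := H u => /forallP /(_ v) /implyP /(_ ruv) lt.
exact: leq_trans av (ltnW lt).
Qed.

Section Coprod.
Variable K : numFieldType.
Local Open Scope ring_scope.

Lemma sum2_split (I J : finType) (A : pred I) (B : pred J) (w : K) c1 c2 :
  (forall w' : K, \sum_i (if A i then w' else 0) = if c1 then w' else 0) ->
  (forall w' : K, \sum_j (if B j then w' else 0) = if c2 then w' else 0) ->
  \sum_i \sum_j (if A i && B j then w else 0) = if c1 && c2 then w else 0.
Proof.
move=> HA HB.
transitivity (\sum_i (if A i then \sum_j (if B j then w else 0) else 0)).
  by apply: eq_bigr => i _; case: (A i) => //=; rewrite big1.
by rewrite HB HA; case: (c1); case: (c2).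
Qed.

Lemma Theta_coprod a b (x : Hcomp K (a + b)) :
  deltaQ (Theta x) = Theta2 (deltaH x).
Proof.
apply/ffunP => -[q1 q2]; rewrite !ffunE /=.
pose tm (F : forest (a + b)) V :=
  if admissible (val F) V then
    (if ((#|RooSet (val F) V| == a)%N && inSn (rawrestr (val F) (RooSet (val F) V)) q1) &&
        ((#|LeaSet (val F) V| == b)%N && inSn (rawrestr (val F) (LeaSet (val F) V)) q2)
     then x F else 0) else 0.
transitivity (\sum_F \sum_V tm F V).
  rewrite big_mkcond /=.
  transitivity (\sum_s \sum_F (if stdc q1 q2 s && inS (val F) s then x F else 0)).
    apply: eq_bigr => s _; rewrite ffunE /stdc; case: ifP => _.
      by rewrite big_mkcond.
    by rewrite big1.
  rewrite exchange_big; apply: eq_bigr => F _.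
  transitivity (\sum_s \sum_V (if (stdc q1 q2 s && inS (val F) s) &&
      (admissible (val F) V && (LeaSet (val F) V == Ls s)) then x F else 0)).
    apply: eq_bigr => s _; case: ifP => h /=; last by rewrite big1.
    have lc : leafclosed (val F) (Ls s) by apply: Ls_closed; case/andP: h.
    under eq_bigr do rewrite (adm_lea_eq (valP F) _ lc).
    by rewrite sum_if1.
  rewrite exchange_big; apply: eq_bigr => V _; rewrite /tm.
  case: (boolP (admissible (val F) V)) => adm; last first.
    by apply: big1 => s _; rewrite /= andbF.
  rewrite -(@perV a b (val F) V (valP F) q1 q2 K (x F)).
  by apply: eq_bigr => s _; rewrite /= eq_sym.
symmetry; rewrite big_mkcond /=.
transitivity (\sum_(pr : forest a * forest b) \sum_F \sum_V
   (if (inS (val pr.1) q1 && inS (val pr.2) q2) &&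
       [&& admissible (val F) V,
           enc (rawrestr (val F) (RooSet (val F) V)) == enc (val pr.1) &
           enc (rawrestr (val F) (LeaSet (val F) V)) == enc (val pr.2)]
    then x F else 0)).
  apply: eq_bigr => pr _; rewrite ffunE; case: ifP => _.
    by apply: eq_bigr => F _; rewrite big_mkcond.
  by rewrite big1 // => F _; rewrite big1.
rewrite exchange_big; apply: eq_bigr => F _.
rewrite exchange_big; apply: eq_bigr => V _; rewrite /tm.
case: (boolP (admissible (val F) V)) => adm /=; last first.
  by apply: big1 => pr _; rewrite andbF.
transitivity (\sum_(F1 : forest a) \sum_(F2 : forest b)
   (if (inS (val F1) q1 && (enc (rawrestr (val F) (RooSet (val F) V)) == enc (val F1))) &&
       (inS (val F2) q2 && (enc (rawrestr (val F) (LeaSet (val F) V)) == enc (val F2)))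
    then x F else 0)).
  rewrite pair_bigA /=; apply: eq_bigr => -[F1 F2] _ /=.
  by case: (inS _ q1); case: (inS _ q2); case: (_ == _); case: (_ == _).
apply: sum2_split => w'; apply: sum_enc; apply: acyclic_restr; exact: valP F.
Qed.
End Coprod.

Theorem mainTheorem4 (K : numFieldType) :
  (* multiplicativity *)
  (forall (k l : nat) (x : Hcomp K k) (y : Hcomp K l),
      Theta (mulH x y) = mulQ (Theta x) (Theta y)) /\
  (* unit *)
  Theta (unitH K) = unitQ K /\
  (* counit (degree 0; both counits vanish in positive degree) *)
  (forall x : Hcomp K 0, counitQ0 (Theta x) = counitH0 x) /\
  (* comultiplicativity, on every bihomogeneous component *)
  (forall (a b : nat) (x : Hcomp K (a + b)),
      deltaQ (Theta x) = Theta2 (deltaH x)).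
Proof.
split; first by move=> k l x y; exact: Theta_mul.
split; first exact: Theta_unit.
split; first by move=> x; exact: Theta_counit.
by move=> a b x; exact: Theta_coprod.
Qed.
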